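(* Let $T\in\mathbb{T}$ be a weighted caterpillar that is not a star, with $n$ pendant vertices and $k$ non-pendant vertices $v_1,\dots,v_k$ such that $v_i$ is adjacent to $v_{i+1}$ for $i=1,\dots,k-1$. Let $t_i$ be the number of pendant vertices adjacent to $v_i$. Then the number of edges of $T^{\#}$ is $n+t_1t_2+t_2t_3+\cdots+t_{k-1}t_k$.
   Context: $\mathbb{T}$ is the class of simple undirected weighted trees $T$ (nonzero real weights on edges) such that (i) $T$ has at least one non-pendant vertex, and (ii) every non-pendant vertex of $T$ is adjacent to at least one pendant vertex (a vertex of degree one). A caterpillar is a tree such that deleting all leaves and their incident edges yields a path. The adjacency matrix $A$ of $T$ has $(i,j)$ entry equal to the weight of edge $v_iv_j$, or $0$ if no edge; $A^{\#}$ is its group inverse (unique $X$ with $AXA=A$, $XAX=X$, $AX=XA$); $T^{\#}$ is the weighted graph on the vertex set of $T$ with $v_iv_j$ an edge iff $(A^{\#})_{ij}\neq 0$, weighted by that entry. *)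

(* Defs.v *)
From HB Require Import structures.
From mathcomp Require Import all_boot all_order all_algebra.
From mathcomp Require Import reals.
Set Implicit Arguments. Unset Strict Implicit. Unset Printing Implicit Defensive.
Import Order.TTheory GRing.Theory Num.Theory.
Local Open Scope ring_scope.

Section WeightedGraphs.
Variables (R : realType) (N : nat).
Implicit Types (A X : 'M[R]_N).

(* A weighted simple undirected graph on vertex set 'I_N, given by its
   (weighted) adjacency matrix: symmetric with zero diagonal; v_i v_j is an
   edge iff A i j != 0, and then its (nonzero) weight is A i j. *)
Definition is_weighted_graph A : Prop :=
  A^T = A /\ forall i, A i i = 0.

Definition adjb A : rel 'I_N := fun i j => A i j != 0.

Definition degree A (i : 'I_N) : nat := #|[set j | A i j != 0]|.

Definition pendant A (i : 'I_N) : bool := degree A i == 1%N.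

Definition edges A : {set 'I_N * 'I_N} :=
  [set p : 'I_N * 'I_N | (p.1 < p.2)%N && (A p.1 p.2 != 0)].

Definition nedges A : nat := #|edges A|.

Definition is_tree A : Prop :=
  is_weighted_graph A /\ (forall i j, connect (adjb A) i j) /\
  nedges A = N.-1.

Definition in_classT A : Prop :=
  is_tree A /\ (exists i, ~~ pendant A i) /\
  (forall i, ~~ pendant A i -> exists j, pendant A j && (A i j != 0)).

(* caterpillar: deleting all leaves yields a path, i.e. the non-pendant
   vertices can be listed without repetition so that consecutive ones are
   adjacent (in a tree the induced subgraph is then exactly that path). *)
Definition is_caterpillar A : Prop :=
  is_tree A /\ exists s : seq 'I_N,
    [/\ uniq s, (forall x, (x \in s) = ~~ pendant A x) & sorted (adjb A) s].

Definition is_star A : Prop :=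
  is_tree A /\ exists c : 'I_N, forall j, j != c -> A c j != 0.

Definition is_group_inverse A X : Prop :=
  [/\ A *m X *m A = A, X *m A *m X = X & A *m X = X *m A].

End WeightedGraphs.

(* Main.v *)
Require Import Defs.
From HB Require Import structures.
From mathcomp Require Import all_boot all_order all_algebra.
From mathcomp Require Import reals.
From mathcomp Require Import zify.
Set Implicit Arguments. Unset Strict Implicit. Unset Printing Implicit Defensive.
Import Order.TTheory GRing.Theory Num.Theory.

Lemma sum_eq_le (f g : nat -> nat) k :
  (forall i, i < k -> f i <= g i) ->
  \sum_(0 <= i < k) f i = \sum_(0 <= i < k) g i -> forall i, i < k -> f i = g i.
Proof.
elim: k => [|k IH] hle heq i hi //.
rewrite !big_nat_recr //= in heq.
have h1 : \sum_(0 <= j < k) f j <= \sum_(0 <= j < k) g j.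
  rewrite big_nat_cond [X in _ <= X]big_nat_cond; apply: leq_sum => j /andP [/andP [_ hj] _].
  by apply: hle; apply: leqW.
have h2 := hle k (ltnSn k).
have ek : f k = g k by lia.
have es : \sum_(0 <= j < k) f j = \sum_(0 <= j < k) g j by lia.
rewrite ltnS leq_eqVlt in hi; case/orP: hi => [/eqP -> //|hi].
apply: IH => //; move=> j hj; apply: hle; exact: leqW.
Qed.

Lemma sum_pick (F : nat -> nat) m k :
  \sum_(0 <= j < k) F j * (j == m) = F m * (m < k).
Proof.
elim: k => [|k IH]; first by rewrite big_geq // ltn0 muln0.
rewrite big_nat_recr //= IH ltnS.
case: (ltngtP m k) => [h|h|<-]; rewrite ?eqxx ?muln0 ?addn0 ?add0n ?ltnn ?leqnn ?muln1 //.
Qed.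

Lemma sum_shift (G : nat -> nat) k :
  \sum_(0 <= i < k) G i * (i.+1 < k) = \sum_(0 <= i < k.-1) G i.
Proof.
case: k => [|k] /=; first by rewrite !big_geq.
rewrite big_nat_recr //= ltnn muln0 addn0.
by apply: eq_big_nat => i /andP [_ hi]; rewrite ltnS hi muln1.
Qed.

Lemma pathsum (t : nat -> nat) k :
  \sum_(0 <= i < k) \sum_(0 <= j < k) t i * t j * ((j == i.+1) + (i == j.+1))
  = 2 * \sum_(0 <= i < k.-1) t i * t i.+1.
Proof.
have e1 : \sum_(0 <= i < k) \sum_(0 <= j < k) t i * t j * (j == i.+1)
          = \sum_(0 <= i < k.-1) t i * t i.+1.
  rewrite -sum_shift; apply: eq_bigr => i _.
  by rewrite (sum_pick (fun j => t i * t j)).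
have e2 : \sum_(0 <= i < k) \sum_(0 <= j < k) t i * t j * (i == j.+1)
          = \sum_(0 <= i < k.-1) t i * t i.+1.
  rewrite exchange_big -e1; apply: eq_bigr => i _; apply: eq_bigr => j _.
  by rewrite [t j * _]mulnC.
rewrite mul2n -addnn -{1}e1 -e2 -big_split /=; apply: eq_bigr => i _.
by rewrite -big_split /=; apply: eq_bigr => j _; rewrite mulnDr.
Qed.

Local Open Scope ring_scope.

Lemma ginv_unique (R : realType) (N : nat) (A X Y : 'M[R]_N) :
  is_group_inverse A X -> is_group_inverse A Y -> X = Y.
Proof.
case=> [h1 h2 h3] [k1 k2 k3].
have e1 : X = X *m X *m A by rewrite -mulmxA -h3 mulmxA h2.
have e2 : X *m A *m Y = X *m X *m A.
  rewrite -{1}h1 !mulmxA -[X *m A *m X]mulmxA h3 mulmxA.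
  rewrite -[X *m X *m A *m A *m Y]mulmxA k3 -!mulmxA [A *m (Y *m A)]mulmxA k1.
  by rewrite !mulmxA.
have e3 : Y = A *m Y *m Y by rewrite k3 k2.
have e4 : Y = X *m A *m Y.
  rewrite {1}e3 -{1}h1 h3 -!mulmxA [A *m (Y *m Y)]mulmxA -e3.
  done.
by rewrite e1 -e2 -e4.
Qed.


Lemma ginv_abstract (R : realType) (N : nat) (B W Wt D Q : 'M[R]_N) :
  B *m Wt = 0 -> W *m D = 0 -> W *m Wt *m D = Q -> Q *m B = B ->
  Wt *m Wt = 0 -> W *m B = 0 -> W *m W = 0 -> D *m W *m Wt = Q ->
  D *m Wt = 0 -> B *m Q = B -> Q *m W = W -> Q *m Wt = 0 -> Wt *m Q = Wt ->
  Q *m D = D -> D *m Q = D ->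
  is_group_inverse (B + W + Wt) (D *m W + Wt *m D - Wt *m D *m B *m D *m W).
Proof.
move=> e1 e2 e3 e4 e5 e6 e7 e8 e9 e10 e11 e12 e13 e14 e15.
set X := _ - _.
have hAX : (B + W + Wt) *m X = Q + Wt *m D *m W.
  rewrite /X !mulmxDl !mulmxBr !mulmxDr !mulmxA e1 e2 !mul0mx.
  rewrite e3 e4 e5 !mul0mx.
  by rewrite !(addr0, subr0, add0r) addrCA subrr addr0.
have hXA : X *m (B + W + Wt) = Q + Wt *m D *m W.
  rewrite /X !mulmxBl !mulmxDr !mulmxDl -!mulmxA e6 e7 e9 !mulmx0.
  rewrite !mulmxA e8 -[Wt *m D *m B *m D *m W *m Wt]mulmxA -[Wt *m D *m B *m D *m (W *m Wt)]mulmxA [D *m (W *m Wt)]mulmxA e8 -[Wt *m D *m B *m Q]mulmxA e10.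
  by rewrite !(addr0, add0r) addrC !addrA addNr add0r addrC.
split; last by rewrite hAX hXA.
- rewrite hAX mulmxDl !mulmxDr e4 e11 e12 -!mulmxA e6 e7 !mulmx0.
  rewrite [D *m (W *m Wt)]mulmxA e8 e13.
  by rewrite !(addr0, add0r).
- rewrite hXA /X mulmxDl !mulmxBr !mulmxDr.
  have t1 : Wt *m D *m W *m (D *m W) = 0.
    by rewrite mulmxA -[Wt *m D *m W *m D]mulmxA e2 mulmx0 mul0mx.
  have t2 : Wt *m D *m W *m (Wt *m D) = Wt *m D.
    by rewrite -!mulmxA [W *m (Wt *m D)]mulmxA e3 e15.
  have t3 : Wt *m D *m W *m (Wt *m D *m B *m D *m W) = Wt *m D *m B *m D *m W.
    rewrite -!mulmxA [W *m (Wt *m _)]mulmxA [W *m Wt *m _]mulmxA e3.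
    by rewrite [D *m (Q *m _)]mulmxA e15 !mulmxA.
  rewrite t1 t2 t3 !mulmxA e14 e12 !mul0mx.
  by rewrite !(addr0, add0r, subr0) addrA.
Qed.


Definition nb (R : realType) (N : nat) (A : 'M[R]_N) (i : 'I_N) : 'I_N :=
  odflt i [pick j | A i j != 0].

Lemma nbP (R : realType) (N : nat) (A : 'M[R]_N) i :
  pendant A i -> forall j, (A i j != 0) = (j == nb A i).
Proof.
move=> /cards1P [x hx] j.
have hxj : forall l, (A i l != 0) = (l == x).
  by move=> l; have := congr1 (fun S : {set 'I_N} => l \in S) hx; rewrite !inE.
rewrite /nb; case: pickP => [y hy|h]; last by move: (h x); rewrite hxj eqxx.
by rewrite hxj; move: hy; rewrite hxj => /eqP ->.
Qed.

Lemma big_nb (R : realType) (N : nat) (A : 'M[R]_N) i (T : Type) (idx : T)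
  (op : Monoid.com_law idx) (F : 'I_N -> T) :
  pendant A i -> (forall l, A i l = 0 -> F l = idx) ->
  \big[op/idx]_l F l = F (nb A i).
Proof.
move=> hi hF; rewrite (bigD1 (nb A i)) //= big1 ?Monoid.mulm1 // => l hl.
by apply: hF; apply/eqP; rewrite -[_ == 0]negbK nbP.
Qed.

Lemma classT_sym (R : realType) (N : nat) (A : 'M[R]_N) :
  in_classT A -> forall a b, A a b = A b a.
Proof. by case=> [[[hT _] _] _] a b; rewrite -{1}hT mxE. Qed.

Lemma nb_np (R : realType) (N : nat) (A : 'M[R]_N) i :
  in_classT A -> pendant A i -> ~~ pendant A (nb A i).
Proof.
move=> hA; have hs := classT_sym hA.
case: hA => [[[hT hd] [hc _]] [[z hz] _]] hi.
apply/negP => hb.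
set b := nb A i in hb *.
have hbi : i == nb A b.
  by rewrite -(nbP hb) hs (nbP hi).
have key : forall u w, A u w != 0 -> (u == i) || (u == b) -> (w == i) || (w == b).
  move=> u w huw /orP [] /eqP eu; move: huw; rewrite eu.
    by rewrite (nbP hi) => ->; rewrite orbT.
  by rewrite (nbP hb) -(eqP hbi) => ->.
have cl : closed (adjb A) [pred x | (x == i) || (x == b)].
  move=> x y /= hxy; rewrite /adjb in hxy.
  apply/idP/idP; first exact: key.
  by apply: key; rewrite hs.
have := closed_connect cl (hc i z); rewrite !inE eqxx /= => /esym /orP [] /eqP e.
  by move: hz; rewrite e hi.
by move: hz; rewrite e hb.
Qed.


Definition dmx (R : realType) (N : nat) (f : 'I_N -> R) : 'M[R]_N :=
  diag_mx (\row_i f i).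

Lemma dmxE (R : realType) (N : nat) (f : 'I_N -> R) i j :
  dmx f i j = f i *+ (i == j).
Proof. by rewrite /dmx !mxE. Qed.

Lemma mul_dmx_mx (R : realType) (N : nat) (f : 'I_N -> R) (M : 'M[R]_N) i j :
  (dmx f *m M) i j = f i * M i j.
Proof. by rewrite /dmx mul_diag_mx !mxE. Qed.

Lemma mul_mx_dmx (R : realType) (N : nat) (f : 'I_N -> R) (M : 'M[R]_N) i j :
  (M *m dmx f) i j = M i j * f j.
Proof. by rewrite /dmx mul_mx_diag !mxE. Qed.

Lemma dmxM (R : realType) (N : nat) (f g h : 'I_N -> R) :
  (forall i, f i * g i = h i) -> dmx f *m dmx g = dmx h.
Proof.
move=> e; apply/matrixP => i j; rewrite mul_dmx_mx !dmxE.
by case: eqP => [->|_]; rewrite ?mulr0 ?mulr1n.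
Qed.

Lemma dmx0 (R : realType) (N : nat) (f : 'I_N -> R) :
  (forall i, f i = 0) -> dmx f = 0.
Proof. by move=> e; apply/matrixP => i j; rewrite dmxE e mxE mul0rn. Qed.

Lemma trdmx (R : realType) (N : nat) (f : 'I_N -> R) : (dmx f)^T = dmx f.
Proof. exact: tr_diag_mx. Qed.

Definition pv (R : realType) (N : nat) (A : 'M[R]_N) i : R := (pendant A i)%:R.
Definition qv (R : realType) (N : nat) (A : 'M[R]_N) i : R := (~~ pendant A i)%:R.
Definition dg (R : realType) (N : nat) (A : 'M[R]_N) a : R :=
  \sum_(l | pendant A l) A a l ^+ 2.
Definition ddv (R : realType) (N : nat) (A : 'M[R]_N) a : R :=
  if pendant A a then 0 else (dg A a)^-1.

Lemma pp0 (R : realType) (N : nat) (A : 'M[R]_N) i j :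
  in_classT A -> pendant A i -> pendant A j -> A i j = 0.
Proof.
move=> hA hi hj; apply/eqP; rewrite -[_ == 0]negbK (nbP hi).
by apply/negP => /eqP e; move: (nb_np hA hi); rewrite -e hj.
Qed.

Lemma dg_neq0 (R : realType) (N : nat) (A : 'M[R]_N) a :
  in_classT A -> ~~ pendant A a -> dg A a != 0.
Proof.
move=> hA ha; case: (hA) => _ [_ hP]; case: (hP a ha) => l /andP [hl hal].
apply/negP => /eqP h0.
have := psumr_eq0P (fun l _ => sqr_ge0 (A a l)) h0 hl.
by move/eqP; rewrite sqrf_eq0 (negbTE hal).
Qed.

Lemma keyK (R : realType) (N : nat) (A : 'M[R]_N) :
  in_classT A ->
  dmx (qv A) *m A *m dmx (pv A) *m A *m dmx (ddv A) = dmx (qv A).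
Proof.
move=> hA; have hs := classT_sym hA.
apply/matrixP => i j; rewrite mul_mx_dmx dmxE mxE.
under eq_bigr do rewrite mul_mx_dmx mul_dmx_mx.
rewrite /qv /ddv.
case hi: (pendant A i) => /=.
  by rewrite big1 ?mul0r ?mul0rn // => l _; rewrite !mul0r.
case hj: (pendant A j) => /=.
  have : i != j by apply/eqP => e; rewrite e hj in hi.
  by move/negbTE => ->; rewrite mulr0 mulr0n.
case: (eqVneq i j) => [<-|nij].
  have -> : \sum_l (1 * A i l * pv A l * A l i) = dg A i.
    rewrite /dg [RHS]big_mkcond; apply: eq_bigr => l _; rewrite /pv.
    case: (pendant A l) => /=; last by rewrite mulr0 mul0r.
    by rewrite mul1r mulr1 expr2 (hs l i).
  by rewrite mulr1n mulfV // dg_neq0 // hi.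
rewrite mulr0n big1 ?mul0r // => l _; rewrite /pv.
case hl: (pendant A l) => /=; last by rewrite mulr0 mul0r.
have [hil|hil] := eqVneq (A l i) 0; first by rewrite (hs i l) hil !(mulr0, mul0r).
have [hlj|hlj] := eqVneq (A l j) 0; first by rewrite hlj mulr0.
rewrite (nbP hl) in hil; rewrite (nbP hl) in hlj.
by move: nij; rewrite (eqP hil) (eqP hlj) eqxx.
Qed.

Lemma X0_ginv (R : realType) (N : nat) (A : 'M[R]_N) :
  in_classT A ->
  let P := dmx (pv A) in let Q := dmx (qv A) in let D := dmx (ddv A) in
  let B := Q *m A *m Q in let W := Q *m A *m P in let Wt := P *m A *m Q in
  is_group_inverse A (D *m W + Wt *m D - Wt *m D *m B *m D *m W).
Proof.
move=> hA P Q D B W Wt.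
have hT : A^T = A by case: hA => [[[hT _] _] _].
have hPQ : P *m Q = 0.
  by rewrite (dmxM (h := fun _ => 0)) ?dmx0 // => i; rewrite /pv /qv; case: pendant; rewrite ?mulr0 ?mul0r.
have hQP : Q *m P = 0.
  by rewrite (dmxM (h := fun _ => 0)) ?dmx0 // => i; rewrite /pv /qv; case: pendant; rewrite ?mulr0 ?mul0r.
have hPP : P *m P = P.
  by rewrite (dmxM (h := pv A)) // => i; rewrite /pv; case: pendant; rewrite ?mulr0 ?mul0r ?mulr1.
have hQQ : Q *m Q = Q.
  by rewrite (dmxM (h := qv A)) // => i; rewrite /qv; case: pendant; rewrite ?mulr0 ?mul0r ?mulr1.
have hPD : P *m D = 0.
  by rewrite (dmxM (h := fun _ => 0)) ?dmx0 // => i; rewrite /pv /ddv; case: pendant; rewrite ?mulr0 ?mul0r.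
have hDP : D *m P = 0.
  by rewrite (dmxM (h := fun _ => 0)) ?dmx0 // => i; rewrite /pv /ddv; case: pendant; rewrite ?mulr0 ?mul0r.
have hQD : Q *m D = D.
  by rewrite (dmxM (h := ddv A)) // => i; rewrite /qv /ddv; case: pendant; rewrite ?mulr0 ?mul0r ?mul1r.
have hDQ : D *m Q = D.
  by rewrite (dmxM (h := ddv A)) // => i; rewrite /qv /ddv; case: pendant; rewrite ?mulr0 ?mul0r ?mulr1.
have hPQ1 : P + Q = 1%:M.
  apply/matrixP => i j; rewrite mxE !dmxE /pv /qv mxE.
  by case: pendant; case: (i == j); rewrite ?mulr0n ?mulr1n ?addr0 ?add0r.
have hPAP : P *m A *m P = 0.
  apply/matrixP => i j; rewrite mul_mx_dmx mul_dmx_mx mxE /pv.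
  case hi: (pendant A i); last by rewrite !mul0r.
  case hj: (pendant A j); last by rewrite mulr0.
  by rewrite (pp0 hA hi hj) mulr0 mul0r.
have hK : Q *m A *m P *m A *m D = Q by apply: keyK.
have hK' : D *m A *m P *m A *m Q = Q.
  have := congr1 trmx hK; rewrite !trmx_mul !trdmx hT !mulmxA.
  by [].
have hA3 : A = B + W + Wt.
  have e : A = (P + Q) *m A *m (P + Q) by rewrite hPQ1 mul1mx mulmx1.
  rewrite {1}e !mulmxDl !mulmxDr hPAP add0r /B /W /Wt.
  by rewrite addrC [Q *m A *m P + _]addrC.
rewrite [in X in is_group_inverse X _]hA3.
apply: (ginv_abstract (Q := Q)).
- by rewrite /B /Wt !mulmxA -[Q *m A *m Q *m P]mulmxA hQP mulmx0 !mul0mx.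
- by rewrite /W -mulmxA hPD mulmx0.
- rewrite /W /Wt !mulmxA -[Q *m A *m P *m P]mulmxA hPP.
  by rewrite -[Q *m A *m P *m A *m Q *m D]mulmxA hQD.
- by rewrite /B !mulmxA hQQ.
- by rewrite /Wt !mulmxA -[P *m A *m Q *m P]mulmxA hQP mulmx0 !mul0mx.
- by rewrite /W /B !mulmxA -[Q *m A *m P *m Q]mulmxA hPQ mulmx0 !mul0mx.
- by rewrite /W !mulmxA -[Q *m A *m P *m Q]mulmxA hPQ mulmx0 !mul0mx.
- by rewrite /W /Wt !mulmxA hDQ -[D *m A *m P *m P]mulmxA hPP.
- by rewrite /Wt !mulmxA hDP !mul0mx.
- by rewrite /B -mulmxA hQQ.
- by rewrite /W !mulmxA hQQ.
- by rewrite /Wt !mulmxA hQP !mul0mx.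
- by rewrite /Wt -mulmxA hQQ.
- exact: hQD.
- exact: hDQ.
Qed.


Definition X0 (R : realType) (N : nat) (A : 'M[R]_N) : 'M[R]_N :=
  let P := dmx (pv A) in let Q := dmx (qv A) in let D := dmx (ddv A) in
  let B := Q *m A *m Q in let W := Q *m A *m P in let Wt := P *m A *m Q in
  D *m W + Wt *m D - Wt *m D *m B *m D *m W.

Lemma X0_supp (R : realType) (N : nat) (A : 'M[R]_N) :
  in_classT A -> forall i j, (X0 A i j != 0) =
  [|| ~~ pendant A i && pendant A j && (A i j != 0),
      pendant A i && ~~ pendant A j && (A i j != 0) |
      pendant A i && pendant A j && (A (nb A i) (nb A j) != 0)].
Proof.
move=> hA; have hs := classT_sym hA => i j.
set P := dmx (pv A); set Q := dmx (qv A); set D := dmx (ddv A).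
set Y := D *m (Q *m A *m P); set Yt := P *m A *m Q *m D.
have eT : P *m A *m Q *m D *m (Q *m A *m Q) *m D *m (Q *m A *m P) = Yt *m A *m Y.
  rewrite /Yt /Y !mulmxA -[P *m A *m Q *m D *m Q]mulmxA (dmxM (h := ddv A)); last first.
    by move=> l; rewrite /qv /ddv; case: pendant; rewrite ?mulr0 ?mulr1.
  rewrite -[P *m A *m Q *m D *m A *m Q *m D]mulmxA (dmxM (h := ddv A)) //.
  by move=> l; rewrite /qv /ddv; case: pendant; rewrite ?mulr0 ?mul1r.
have eX : X0 A i j = Y i j + Yt i j - (Yt *m A *m Y) i j.
  by rewrite /X0 -eT !mxE.
have eY : forall a b, Y a b = ddv A a * (qv A a * A a b * pv A b).
  by move=> a b; rewrite /Y mul_dmx_mx mul_mx_dmx mul_dmx_mx.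
have eYt : forall a b, Yt a b = pv A a * A a b * qv A b * ddv A b.
  by move=> a b; rewrite /Yt mul_mx_dmx mul_mx_dmx mul_dmx_mx.
have T0i : ~~ pendant A i -> (Yt *m A *m Y) i j = 0.
  move=> hi; rewrite mxE big1 // => m _; rewrite mxE big1 ?mul0r // => l _.
  by rewrite eYt /pv (negbTE hi) !mul0r.
have T0j : ~~ pendant A j -> (Yt *m A *m Y) i j = 0.
  by move=> hj; rewrite mxE big1 // => m _; rewrite eY /pv (negbTE hj) !mulr0.
have Tpp : pendant A i -> pendant A j -> (Yt *m A *m Y) i j =
    Yt i (nb A i) * A (nb A i) (nb A j) * Y (nb A j) j.
  move=> hi hj; rewrite mxE.
  have inner : forall m, (Yt *m A) i m = Yt i (nb A i) * A (nb A i) m.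
    move=> m; rewrite mxE (big_nb _ hi) // => l hl.
    by rewrite eYt hl mulr0 !mul0r.
  under eq_bigr => m _ do rewrite inner.
  rewrite (big_nb _ hj) // => m hm.
  by rewrite eY (hs m j) hm mulr0 mul0r !mulr0.
rewrite eX; case hi: (pendant A i); case hj: (pendant A j) => /=.
- rewrite Tpp // !eY !eYt.
  have ha := nb_np hA hi; have hb := nb_np hA hj.
  have hia : A i (nb A i) != 0 by rewrite (nbP hi).
  have hbj : A (nb A j) j != 0 by rewrite hs (nbP hj).
  have da := dg_neq0 hA ha; have db := dg_neq0 hA hb.
  rewrite /pv /qv /ddv hi hj (negbTE ha) (negbTE hb) /=.
  rewrite !(mul0r, mulr0, mul1r, mulr1, add0r, sub0r) oppr_eq0 !mulf_eq0 !invr_eq0.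
  by rewrite (negbTE hia) (negbTE hbj) (negbTE da) (negbTE db) /= orbF.
- have hj' : ~~ pendant A j by rewrite hj.
  rewrite T0j // eY eYt /pv /qv /ddv hi hj /=.
  have dj := dg_neq0 hA hj'.
  rewrite !(mul0r, mulr0, mul1r, mulr1, add0r, sub0r, subr0) !mulf_eq0 invr_eq0.
  by rewrite (negbTE dj) !orbF.
- have hi' : ~~ pendant A i by rewrite hi.
  rewrite T0i // eY eYt /pv /qv /ddv hi hj /=.
  have di := dg_neq0 hA hi'.
  rewrite !(mul0r, mulr0, mul1r, mulr1, add0r, addr0, sub0r, subr0) !mulf_eq0 invr_eq0.
  by rewrite (negbTE di) !orbF.
- have hi' : ~~ pendant A i by rewrite hi.
  rewrite T0i // eY eYt /pv /qv /ddv hi hj /=.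
  by rewrite !(mul0r, mulr0, mul1r, mulr1, add0r, addr0, sub0r, subr0) eqxx.
Qed.


Lemma card_sumb (T : finType) (P : pred T) : #|[set x | P x]| = (\sum_x (P x : nat))%N.
Proof.
rewrite -sum1dep_card big_mkcond /=; apply: eq_bigr => x _.
by case: (P x).
Qed.

Lemma reindex_np (R : realType) (N : nat) (A : 'M[R]_N) k (v : nat -> 'I_N)
   (F : 'I_N -> nat) :
  {in gtn k &, injective v} ->
  (forall x, ~~ pendant A x <-> exists2 i, (i < k)%N & v i = x) ->
  (\sum_(a | ~~ pendant A a) F a = \sum_(i < k) F (v i))%N.
Proof.
move=> hinj hv.
pose h : 'I_k -> 'I_N := fun i => v i.
have hh : injective h.
  by move=> i j e; apply: val_inj; apply: hinj => //; rewrite inE ltn_ord.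
rewrite (eq_bigl (mem [set h x | x in 'I_k])); last first.
  move=> a; apply/idP/imsetP.
    by case/hv => i hi <-; exists (Ordinal hi).
  by case=> i _ ->; apply/hv; exists i.
by rewrite big_imset //; move=> x y _ _; apply: hh.
Qed.

Lemma nedges2 (R : realType) (N : nat) (M : 'M[R]_N) :
  (forall i j, (M i j != 0%R) = (M j i != 0%R)) -> (forall i, M i i = 0) ->
  ((nedges M).*2 = \sum_(i : 'I_N) \sum_(j : 'I_N) ((M i j != 0%R) : nat))%N.
Proof.
move=> hs hd.
have e1 : nedges M = (\sum_(i : 'I_N) \sum_(j : 'I_N) (((i < j)%N && (M i j != 0%R)) : nat))%N.
  by rewrite /nedges /edges card_sumb pair_bigA.
have e2 : (\sum_(i : 'I_N) \sum_(j : 'I_N) (((j < i)%N && (M i j != 0%R)) : nat) =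
           \sum_(i : 'I_N) \sum_(j : 'I_N) (((i < j)%N && (M i j != 0%R)) : nat))%N.
  rewrite exchange_big; apply: eq_bigr => i _; apply: eq_bigr => j _.
  by rewrite hs.
rewrite -addnn {1}e1 -e2 e1 -big_split /=; apply: eq_bigr => i _.
rewrite -big_split /=; apply: eq_bigr => j _.
case: (ltngtP i j) => [h|h|h] /=; rewrite ?addn0 //.
by rewrite (val_inj h) hd eqxx.
Qed.

Definition tpn (R : realType) (N : nat) (A : 'M[R]_N) (a : 'I_N) : nat :=
  (\sum_x ((pendant A x && (A a x != 0%R)) : nat))%N.

Lemma L1 (R : realType) (N : nat) (A : 'M[R]_N) : in_classT A ->
  (\sum_(i : 'I_N) \sum_(j : 'I_N) ((pendant A i && ~~ pendant A j && (A i j != 0%R)) : nat)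
   = \sum_i (pendant A i : nat))%N.
Proof.
move=> hA; apply: eq_bigr => i _.
case hi: (pendant A i) => /=; last by rewrite big1.
rewrite (big_nb _ hi) => [|l ->]; last by rewrite eqxx andbF.
by rewrite nb_np // (nbP hi) eqxx.
Qed.

Lemma L2 (R : realType) (N : nat) (A : 'M[R]_N) : in_classT A ->
  (\sum_(i : 'I_N) \sum_(j : 'I_N) ((~~ pendant A i && pendant A j && (A i j != 0%R)) : nat)
   = \sum_i (pendant A i : nat))%N.
Proof.
move=> hA; rewrite -(L1 hA) exchange_big; apply: eq_bigr => i _.
apply: eq_bigr => j _.
by rewrite (classT_sym hA j i) [~~ pendant A j && _]andbC.
Qed.

Lemma fiber (R : realType) (N : nat) (A : 'M[R]_N) (G : 'I_N -> nat) :
  in_classT A ->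
  (\sum_(i | pendant A i) G (nb A i) = \sum_(a | ~~ pendant A a) tpn A a * G a)%N.
Proof.
move=> hA.
rewrite (partition_big (nb A) (fun a => ~~ pendant A a)) /=; last first.
  by move=> i hi; apply: nb_np.
apply: eq_bigr => a ha.
rewrite (eq_bigr (fun _ => 1 * G a)%N); last by move=> i /andP [_ /eqP ->]; rewrite mul1n.
rewrite -big_distrl /= sum1dep_card card_sumb /tpn; congr (_ * _)%N.
apply: eq_bigr => x _; case hx: (pendant A x) => //=.
by rewrite (classT_sym hA) (nbP hx) eq_sym.
Qed.

Lemma sum_andb (N : nat) (P Q : pred 'I_N) (F : 'I_N -> 'I_N -> bool) :
  (\sum_(i : 'I_N) \sum_(j : 'I_N) ((P i && Q j && F i j) : nat)
   = \sum_(i | P i) \sum_(j | Q j) (F i j : nat))%N.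
Proof.
rewrite [RHS]big_mkcond; apply: eq_bigr => i _; case: (P i) => /=; last by rewrite big1.
by rewrite [RHS]big_mkcond; apply: eq_bigr => j _; case: (Q j).
Qed.

Lemma SA (R : realType) (N : nat) (A : 'M[R]_N) : in_classT A ->
  (\sum_(i : 'I_N) \sum_(j : 'I_N) ((A i j != 0%R) : nat) =
   \sum_(a | ~~ pendant A a) \sum_(b | ~~ pendant A b) ((A a b != 0%R) : nat)
   + (\sum_i (pendant A i : nat) + \sum_i (pendant A i : nat)))%N.
Proof.
move=> hA.
rewrite -{1}(L1 hA) -(L2 hA) -sum_andb -!big_split /=.
apply: eq_bigr => i _; rewrite -!big_split /=; apply: eq_bigr => j _.
case hi: (pendant A i); case hj: (pendant A j) => //=; rewrite ?addn0 //.
by rewrite (pp0 hA hi hj) eqxx.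
Qed.

Lemma SX (R : realType) (N : nat) (A : 'M[R]_N) : in_classT A ->
  (\sum_(i : 'I_N) \sum_(j : 'I_N) ((X0 A i j != 0%R) : nat) =
   \sum_(a | ~~ pendant A a) \sum_(b | ~~ pendant A b)
       (tpn A a * tpn A b * ((A a b != 0%R) : nat))
   + (\sum_i (pendant A i : nat) + \sum_i (pendant A i : nat)))%N.
Proof.
move=> hA.
have e3 : (\sum_(i : 'I_N) \sum_(j : 'I_N)
     ((pendant A i && pendant A j && (A (nb A i) (nb A j) != 0%R)) : nat) =
   \sum_(a | ~~ pendant A a) \sum_(b | ~~ pendant A b)
       (tpn A a * tpn A b * ((A a b != 0%R) : nat)))%N.
  rewrite (sum_andb (fun i => pendant A i) (fun j => pendant A j)
     (fun i j => A (nb A i) (nb A j) != 0%R)).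
  under eq_bigr => i _ do rewrite (fiber (fun b => ((A (nb A i) b != 0%R) : nat)) hA).
  rewrite (fiber (fun a => \sum_(b | ~~ pendant A b) tpn A b * ((A a b != 0%R) : nat))%N hA).
  apply: eq_bigr => a _; rewrite big_distrr /=; apply: eq_bigr => b _.
  by rewrite mulnA.
rewrite -e3 -{1}(L1 hA) -(L2 hA) -!big_split /=.
apply: eq_bigr => i _; rewrite -!big_split /=; apply: eq_bigr => j _.
rewrite (X0_supp hA).
case hi: (pendant A i); case hj: (pendant A j) => /=; rewrite ?addn0 ?add0n ?orbF //.
Qed.


Theorem proposition3p12 (R : realType) (N : nat) (A : 'M[R]_N)
  (n k : nat) (v : nat -> 'I_N) (t : nat -> nat) :
  in_classT A -> is_caterpillar A -> ~ is_star A ->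
  n = #|[set x | pendant A x]| ->
  {in gtn k &, injective v} ->
  (forall x : 'I_N, ~~ pendant A x <-> exists2 i, (i < k)%N & v i = x) ->
  (forall i, (i.+1 < k)%N -> A (v i) (v i.+1) != 0) ->
  (forall i, t i = #|[set x | pendant A x & A (v i) x != 0]|) ->
  forall X : 'M[R]_N, is_group_inverse A X ->
  nedges X = (n + \sum_(0 <= i < k.-1) t i * t i.+1)%N.
Proof.
move=> hA _ _ hn hinj hv hadj ht X hX.
have hs := classT_sym hA.
have hd : forall i, A i i = 0 by case: hA => [[[_ hd] _] _].
have hE : nedges A = N.-1 by case: hA => [[_ [_ hE]] _].
have eX : X = X0 A by apply: (ginv_unique hX); exact: (X0_ginv hA).
set n' := (\sum_(i : 'I_N) (pendant A i : nat))%N.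
have hn' : n = n' by rewrite hn (@card_sumb _ (fun x => pendant A x)).
have ht' : forall i, t i = tpn A (v i) by move=> i; rewrite ht (@card_sumb _ (fun x => pendant A x && (A (v i) x != 0))).
have hk : (0 < k)%N.
  case: hA => [_ [[z hz] _]]; case/hv: hz => i hi _.
  exact: (leq_ltn_trans (leq0n i) hi).
have hN : N = (n' + k)%N.
  have e1 : (\sum_(i : 'I_N) 1 = N)%N by rewrite sum1_card card_ord.
  have e2 : (\sum_(i : 'I_N) (~~ pendant A i : nat) = k)%N.
    rewrite (eq_bigr (fun i => if ~~ pendant A i then 1 else 0)%N); last first.
      by move=> i _; case: pendant.
    by rewrite -big_mkcond (reindex_np _ hinj hv) /= sum1_card card_ord.
  by rewrite -{1}e1 -e2 /n' -big_split; apply: eq_bigr => i _; case: pendant.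
have hsA : (nedges A).*2 = (\sum_(a | ~~ pendant A a) \sum_(b | ~~ pendant A b)
     ((A a b != 0%R) : nat) + (n' + n'))%N.
  by rewrite (nedges2 (M := A)) ?(SA hA) // => i j; rewrite hs.
have ereix : forall F : 'I_N -> 'I_N -> nat,
    (\sum_(a | ~~ pendant A a) \sum_(b | ~~ pendant A b) F a b =
     \sum_(0 <= i < k) \sum_(0 <= j < k) F (v i) (v j))%N.
  move=> F; rewrite (reindex_np _ hinj hv) [RHS]big_mkord; apply: eq_bigr => i _.
  by rewrite (reindex_np _ hinj hv) big_mkord.
have hnp : (\sum_(0 <= i < k) \sum_(0 <= j < k) ((A (v i) (v j) != 0%R) : nat)
     = 2 * k.-1)%N.
  rewrite -(ereix (fun a b => ((A a b != 0%R) : nat))).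
  move: hsA; rewrite hE; lia.
have cle : forall i j, (i < k)%N -> (j < k)%N ->
    ((j == i.+1) + (i == j.+1) <= ((A (v i) (v j) != 0%R) : nat))%N.
  move=> i j hi hj.
  case: (eqVneq j i.+1) => [ej|ne1].
    have -> : (i == j.+1) = false by apply/eqP; lia.
    by rewrite ej hadj // -ej.
  case: (eqVneq i j.+1) => [ei|ne2] //=.
  by rewrite hs ei hadj // -ei.
have csum : (\sum_(0 <= i < k) \sum_(0 <= j < k) ((j == i.+1) + (i == j.+1))
     = 2 * k.-1)%N.
  have e := pathsum (fun _ => 1%N) k.
  have e' : (\sum_(0 <= i < k.-1) 1 * 1 = k.-1)%N.
    by rewrite sum_nat_const_nat subn0 !muln1.
  rewrite e' in e; rewrite -e.
  by apply: eq_bigr => i _; apply: eq_bigr => j _; rewrite !mul1n.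
have ceq : forall i j, (i < k)%N -> (j < k)%N ->
    ((A (v i) (v j) != 0%R) : nat) = ((j == i.+1) + (i == j.+1))%N.
  move=> i j hi hj; symmetry.
  have hle : forall l, (l < k)%N -> (\sum_(0 <= j < k) ((j == l.+1) + (l == j.+1))
      <= \sum_(0 <= j < k) ((A (v l) (v j) != 0%R) : nat))%N.
    move=> l hl; rewrite big_nat_cond [X in (_ <= X)%N]big_nat_cond.
    by apply: leq_sum => j' /andP [/andP [_ hj'] _]; apply: cle.
  have hrow := sum_eq_le hle (etrans csum (esym hnp)) hi.
  by apply: (sum_eq_le _ hrow hj) => l hl; apply: cle.
rewrite eX; apply: double_inj.
rewrite (nedges2 (M := X0 A)); first last.
- move=> i; apply/eqP; rewrite -[_ == 0]negbK (X0_supp hA) !hd eqxx.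
  by rewrite !andbF.
- move=> i j; rewrite !(X0_supp hA) (hs j i) (hs (nb A j) (nb A i)).
  by case: (pendant A i); case: (pendant A j); rewrite /= ?orbF.
rewrite (SX hA) (ereix (fun a b => tpn A a * tpn A b * ((A a b != 0%R) : nat))%N).
have -> : (\sum_(0 <= i < k) \sum_(0 <= j < k)
      (tpn A (v i) * tpn A (v j) * ((A (v i) (v j) != 0%R) : nat)) =
    \sum_(0 <= i < k) \sum_(0 <= j < k) (t i * t j * ((j == i.+1) + (i == j.+1))))%N.
  apply: eq_big_nat => i /andP [_ hi]; apply: eq_big_nat => j /andP [_ hj].
  by rewrite ceq // !ht'.
rewrite pathsum hn' -/n' -addnn; lia.
Qed.
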